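(* Let $p$ be a prime and let $\Phi_p$ be the set of all $\operatorname{fpt}(R,f)$, where $R$ ranges over $F$-pure rings of characteristic $p$ and $f$ over non-zero non-units of $R$. Then for every $\lambda\in\Phi_p$ and every integer $e\ge1$, we have $\langle\lambda\rangle_e\cdot\frac{p^e}{p^e-1}\le\lambda$.
   Context: A ring $R$ of characteristic $p$ is $F$-pure if $R\subseteq R^{1/p}$ splits as a map of $R$-modules. Roots and splitting. $R^{1/p^e}$ is the ring of formal $p^e$-th roots of elements of $R$, containing $R$ via $r\mapsto (r^{p^e})^{1/p^e}$. We write $f^{a/p^e}:=(f^a)^{1/p^e}$. The inclusion $R\cdot t\subseteq R^{1/p^e}$ splits if some $R$-linear $\theta:R^{1/p^e}\to R$ has $\theta(t)=1$. $F$-pure threshold. $(R,f^\lambda)$ is $F$-pure if $R\cdot f^{\lfloor (p^e-1)\lambda\rfloor/p^e}\subseteq R^{1/p^e}$ splits for all $e\ge1$. $\operatorname{fpt}(R,f)$ is the supremum of all $\lambda\ge0$ with $(R,f^\lambda)$ $F$-pure; it lies in $[0,1]$. Truncations. For $\alpha\in(0,1]$ with non-terminating base $p$ expansion $\alpha=\sum_{e\ge1}a_e/p^e$ (digits $0\le a_e\le p-1$, not all eventually zero), $\langle\alpha\rangle_e:=\sum_{i=1}^e a_i/p^i$. By convention $\langle0\rangle_e=0$. *)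

(* Defs.v *)
From HB Require Import structures.
From mathcomp Require Import all_boot all_order all_algebra.
From mathcomp Require Import all_classical all_reals all_analysis.
Unset Printing Implicit Defensive.
Import Order.TTheory GRing.Theory Num.Theory numFieldNormedType.Exports.
Local Open Scope classical_set_scope.
Local Open Scope ring_scope.

(* R^{1/p^e} is identified with R as an additive group; the element
   x^{1/p^e} corresponds to x, and r in R acts by r . x^{1/p^e} = (r^{p^e} x)^{1/p^e}.
   An R-linear map theta : R^{1/p^e} -> R is thus an additive map with
   theta (r^{p^e} * x) = r * theta x. *)
Definition root_linear (R : comNzRingType) (p e : nat) (theta : R -> R) : Prop :=
  (forall x y : R, theta (x + y) = theta x + theta y) /\
  (forall r x : R, theta (r ^+ (p ^ e) * x) = r * theta x).

(* The inclusion R . t^{1/p^e} ⊆ R^{1/p^e} splits. *)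
Definition splits_at (R : comNzRingType) (p e : nat) (t : R) : Prop :=
  exists theta : R -> R, root_linear R p e theta /\ theta t = 1.

Definition Fpure (R : comNzRingType) (p : nat) : Prop := splits_at R p 1 1.

Definition Fpure_pair (RR : realType) (R : comNzRingType) (p : nat) (f : R) (l : RR) : Prop :=
  forall e : nat, (0 < e)%N ->
    splits_at R p e (f ^+ Num.truncn (((p ^ e)%:R - 1) * l)).

Definition fpt (RR : realType) (R : comNzRingType) (p : nat) (f : R) : RR :=
  sup [set l : RR | 0 <= l /\ Fpure_pair RR R p f l].

(* a (indexed from 1) is a non-terminating base-p expansion of alpha. *)
Definition nonterm_expansion (RR : realType) (p : nat) (alpha : RR) (a : nat -> nat) : Prop :=
  (forall i, (a i < p)%N) /\
  ((fun n : nat => \sum_(1 <= i < n.+1) (a i)%:R / (p%:R ^+ i) : RR) @ \oo --> alpha) /\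
  (forall N : nat, exists i : nat, (N <= i)%N /\ a i <> 0%N).

(* t = <alpha>_e, with the convention <0>_e = 0. *)
Definition is_trunc (RR : realType) (p : nat) (alpha : RR) (e : nat) (t : RR) : Prop :=
  (alpha = 0 /\ t = 0) \/
  (0 < alpha <= 1 /\ exists a : nat -> nat, nonterm_expansion RR p alpha a /\
      t = \sum_(1 <= i < e.+1) (a i)%:R / (p%:R ^+ i)).

(* Main.v *)
Require Import Defs.
From HB Require Import structures.
From mathcomp Require Import all_boot all_order all_algebra.
From mathcomp Require Import all_classical all_reals all_analysis.
Import Order.TTheory GRing.Theory Num.Theory.
Local Open Scope ring_scope.
From mathcomp Require Import ring lra.
Import numFieldNormedType.Exports.

Lemma splits_lower (R : comNzRingType) p n (x y : R) :
  splits_at R p n (x * y) -> splits_at R p n x.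
Proof.
case=> th [[hadd hlin] h1]; exists (fun z => th (y * z)); split => //.
  split; first by move=> a b; rewrite mulrDr hadd.
  by move=> r a; rewrite mulrCA hlin.
by rewrite mulrC.
Qed.

Lemma splits_comp (R : comNzRingType) p m n (x y : R) :
  splits_at R p m x -> splits_at R p n y ->
  splits_at R p (m + n) (y ^+ (p ^ m) * x).
Proof.
case=> th [[hadd hlin] h1]; case=> ps [[padd plin] p1].
exists (fun z => ps (th z)); split.
  split; first by move=> a b; rewrite hadd padd.
  by move=> r a; rewrite expnD mulnC exprM hlin plin.
by rewrite hlin h1 mulr1.
Qed.

Lemma frob_add {R : comNzRingType} {p} (hp : prime p) (hc : p \in [pchar R]) d (x y : R) :
  (x + y) ^+ (p ^ d) = x ^+ (p ^ d) + y ^+ (p ^ d).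
Proof.
elim: d => [|d IH]; first by rewrite !expn0 !expr1.
rewrite expnS mulnC !exprM IH exprDn_pchar // pnatE //.
Qed.

Lemma splits_desc (R : comNzRingType) p (hp : prime p) (hc : p \in [pchar R]) n d (y w : R) :
  splits_at R p (n + d) (y ^+ (p ^ d) * w) -> splits_at R p n y.
Proof.
case=> th [[hadd hlin] h1]; exists (fun z => th (z ^+ (p ^ d) * w)); split => //.
split; first by move=> a b; rewrite (frob_add hp hc) mulrDl hadd.
by move=> r a; rewrite exprMn -exprM -expnD -mulrA hlin.
Qed.

Lemma splits_one (R : comNzRingType) p (hFp : Fpure R p) n : splits_at R p n 1.
Proof.
elim: n => [|n IH].
  by exists id; split => //; split => // r x; rewrite expn0 expr1.
have := @splits_comp _ _ _ _ _ _ hFp IH; by rewrite expr1n mulr1 add1n.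
Qed.

Lemma splits_nonunit (R : comNzRingType) p n (f : R) b :
  ~ (exists g : R, f * g = 1) -> (p ^ n <= b)%N -> ~ splits_at R p n (f ^+ b).
Proof.
move=> hu hb hs; apply: hu.
have : splits_at R p n (f ^+ (p ^ n) * 1).
  by rewrite mulr1; apply: (@splits_lower _ _ _ _ (f ^+ (b - p ^ n))); rewrite -exprD subnKC.
case=> th [[_ hlin] h1]; exists (th 1); by rewrite -hlin.
Qed.
Fixpoint pser (q k : nat) : nat := match k with 0 => 0 | k.+1 => 1 + q * pser q k end.

Lemma pserR (RR : realType) q k : (pser q k)%:R * (q%:R - 1) = (q%:R ^+ k - 1 :> RR).
Proof.
elim: k => [|k IH] /=; first by rewrite mul0r expr0 subrr.
by rewrite natrD natrM mulrDl mul1r -mulrA IH exprS; lra.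
Qed.

Lemma splits0 (R : comNzRingType) p : splits_at R p 0 1.
Proof. by exists id; split => //; split => // r x; rewrite expn0 expr1. Qed.

Lemma splits_iter (R : comNzRingType) p e (f : R) A k :
  splits_at R p e (f ^+ A) -> splits_at R p (k * e) (f ^+ (A * pser (p ^ e) k)).
Proof.
move=> h; elim: k => [|k IH]; first by rewrite muln0 expr0 mul0n; apply: splits0.
have := @splits_comp _ _ _ _ _ _ h IH.
have -> : (A * pser (p ^ e) k.+1 = A * pser (p ^ e) k * p ^ e + A)%N by rewrite /= mulnDr muln1 addnC mulnCA mulnC. by rewrite -exprM -exprD mulSn.
Qed.

Lemma periodic_fpure (RR : realType) (R : comNzRingType) p (hp : prime p)
  (hc : p \in [pchar R]) e (he : (0 < e)%N) (f : R) A :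
  splits_at R p e (f ^+ A) -> Fpure_pair RR R p f (A%:R / ((p ^ e)%:R - 1)).
Proof.
move=> h n hn.
have hp1 : (1 < p)%N by apply: prime_gt1.
have hQ : (1 < p ^ e)%N by rewrite -(expn0 p) ltn_exp2l.
have hnN : (n <= n * e)%N by rewrite leq_pmulr.
set d := (n * e - n)%N.
set B := (A * pser (p ^ e) n)%N.
have hs := @splits_iter _ _ _ _ _ n h; rewrite -/B in hs.
have hB : f ^+ B = (f ^+ (B %/ p ^ d)) ^+ (p ^ d) * f ^+ (B %% p ^ d).
  by rewrite -exprM -exprD -divn_eq.
rewrite hB -(subnKC hnN) -/d in hs.
have hs2 := @splits_desc _ _ hp hc _ _ _ _ hs.
set c := Num.truncn _.
have hcle : (c <= B %/ p ^ d)%N.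
  rewrite leq_divRL ?expn_gt0 ?(ltnW hp1) // -(ler_nat RR).
  have hc0 : (c%:R : RR) <= ((p ^ n)%:R - 1) * (A%:R / ((p ^ e)%:R - 1)).
    rewrite truncn_le; apply: mulr_ge0; first by rewrite subr_ge0 ler1n expn_gt0 ltnW.
    by apply: divr_ge0 => //; rewrite subr_ge0 ler1n ltnW.
  have hQ1 : (0 : RR) < (p ^ e)%:R - 1 by rewrite subr_gt0 ltr1n.
  have hS : ((pser (p ^ e) n)%:R : RR) = ((p ^ n)%:R * (p ^ d)%:R - 1) / ((p ^ e)%:R - 1).
    apply: (mulIf (lt0r_neq0 hQ1)); rewrite divfK ?(lt0r_neq0 hQ1) // pserR.
    by rewrite -natrX -!natrM -expnM -expnD subnKC // mulnC.
  rewrite natrM /B natrM hS.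
  set z := (A%:R : RR) / ((p ^ e)%:R - 1).
  have hz : 0 <= z by apply: divr_ge0 => //; apply: ltW.
  have hD : (1 : RR) <= (p ^ d)%:R by rewrite ler1n expn_gt0 ltnW.
  have hP : (1 : RR) <= (p ^ n)%:R by rewrite ler1n expn_gt0 ltnW.
  rewrite -/z in hc0.
  have -> : (A%:R : RR) * (((p ^ n)%:R * (p ^ d)%:R - 1) / ((p ^ e)%:R - 1))
           = z * ((p ^ n)%:R * (p ^ d)%:R - 1) by rewrite /z; field; apply: lt0r_neq0.
  have := ler_wpM2r (le_trans ler01 hD) hc0.
  nra.
apply: (@splits_lower _ _ _ _ (f ^+ (B %/ p ^ d - c))).
by rewrite -exprD subnKC.
Qed.
Theorem mainTheorem4 (RR : realType) (p : nat) (hp : prime p)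
  (R : comNzRingType) (hchar : p \in [pchar R]) (hFp : Fpure R p)
  (f : R) (hf0 : f != 0) (hfu : ~ (exists g : R, f * g = 1))
  (e : nat) (he : (0 < e)%N) (t : RR) :
  is_trunc RR p (fpt RR R p f) e t ->
  t * ((p ^ e)%:R / ((p ^ e)%:R - 1)) <= fpt RR R p f.
Proof.
have hp1 : (1 < p)%N by apply: prime_gt1.
set E := [set l : RR | 0 <= l /\ Fpure_pair RR R p f l]%classic.
have hfE : fpt RR R p f = sup E by [].
have hub : forall l, E l -> l <= p%:R.
  move=> l [l0 hl]; have := hl 1%N isT.
  case: (leqP (p ^ 1) (Num.truncn (((p ^ 1)%:R - 1) * l))) => hle hs.
    by case: (@splits_nonunit _ _ _ _ _ hfu hle hs).
  rewrite truncn_lt_nat in hle; last by apply: mulr_ge0 => //; rewrite subr_ge0 ler1n expn_gt0 ltnW.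
  rewrite expn1 in hle.
  have : (2 : RR) <= p%:R by rewrite ler_nat.
  nra.
have hE0 : E 0.
  split => // n _; rewrite mulr0 truncn0 expr0; exact: splits_one.
have hsup : has_sup E by split; [exists 0 | exists p%:R => l /hub].
case.
  by case=> -> ->; rewrite mul0r.
move=> [/andP [hl0 _] [a [[ha [hcv hnt]] ht]]].
rewrite hfE in hl0 hcv *.
set lam := sup E in hl0 hcv *.
set u := (fun n : nat => \sum_(1 <= i < n.+1) (a i)%:R / (p%:R ^+ i) : RR) in hcv.
have hpR : (p%:R : RR) != 0 by rewrite pnatr_eq0 -lt0n ltnW.
set A := (\sum_(1 <= i < e.+1) a i * p ^ (e - i))%N.
have hA : t = A%:R / (p ^ e)%:R.
  rewrite ht /A natr_sum mulr_suml; apply: eq_big_nat => i /andP [hi1 hie].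
  rewrite ltnS in hie.
  have -> : ((p ^ e)%:R : RR) = p%:R ^+ (e - i) * p%:R ^+ i by rewrite -exprD subnK // natrX.
  by rewrite natrM natrX; field; rewrite !expf_neq0.
have hinc : nondecreasing_seq u.
  apply/nondecreasing_seqP => n; rewrite /u [X in _ <= X]big_nat_recr //=.
  by rewrite lerDl divr_ge0 // exprn_ge0.
have hlim : limn u = lam by apply: cvg_lim.
have htl : t < lam.
  case: (hnt e.+1) => [[|j] [hj hne]] //.
  have hue : t = u e by rewrite ht.
  apply: (@lt_le_trans _ _ (u j.+1)); last by rewrite -hlim; apply: nondecreasing_cvgn_le => //; apply: cvgP hcv.
  have hue2 : u e <= u j by apply: hinc; rewrite -ltnS.
  rewrite hue; apply: (le_lt_trans hue2).
  have -> : u j.+1 = u j + (a j.+1)%:R / p%:R ^+ j.+1 by rewrite /u big_nat_recr.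
  rewrite ltrDl divr_gt0 ?exprn_gt0 ?ltr0n ?lt0n ?ltnW //; [exact/eqP | by rewrite -lt0n ltnW].
set del := lam - t.
have hdel : 0 < del by rewrite subr_gt0.
have [l hlE hll] := sup_adherent (divr_gt0 hdel (ltr0n RR 2)) hsup.
rewrite -/lam in hll.
set N := maxn e (Num.truncn (2 * p%:R / del)).+1.
have heN : (e <= N)%N by rewrite leq_maxl.
have hPN : 2 * p%:R / del < (p ^ N)%:R.
  apply: (lt_le_trans (truncnS_gt _)); rewrite ler_nat.
  by apply: (leq_trans (leq_maxr e _)); apply: ltnW; apply: ltn_expl.
have hPd : 2 * p%:R < (p ^ N)%:R * del by rewrite -ltr_pdivrMr.
have hlp := hub l hlE.
case: hlE => hl0' hl.
have hXQ : ((p ^ (N - e))%:R : RR) * (p ^ e)%:R = (p ^ N)%:R by rewrite -natrM -expnD subnK.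
have hQ0 : ((p ^ e)%:R : RR) != 0 by rewrite pnatr_eq0 expn_eq0 negb_and -lt0n ltnW.
have hineq : ((A * p ^ (N - e))%N%:R : RR) <= ((p ^ N)%:R - 1) * l.
  have -> : ((A * p ^ (N - e))%N%:R : RR) = t * (p ^ N)%:R.
    by rewrite natrM hA -hXQ; field.
  have hdl : del / 2 < l - t by move: hll; rewrite /del; lra.
  have hP0 : (0 : RR) <= (p ^ N)%:R by [].
  have := ler_wpM2l hP0 (ltW hdl).
  have : (0 : RR) <= p%:R by [].
  nra.
have hs := hl N (leq_trans he heN).
rewrite -truncn_ge_nat in hineq; last by apply: mulr_ge0 => //; rewrite subr_ge0 ler1n expn_gt0 ltnW.
have hs2 : splits_at R p N (f ^+ (A * p ^ (N - e))).
  apply: (@splits_lower _ _ _ _ (f ^+ (Num.truncn (((p ^ N)%:R - 1) * l) - A * p ^ (N - e)))).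
  by rewrite -exprD subnKC.
have hs3 : splits_at R p (e + (N - e)) ((f ^+ A) ^+ (p ^ (N - e)) * 1).
  by rewrite mulr1 -exprM subnKC.
move: hs3 => hs2'.
have hsA := @splits_desc _ _ hp hchar _ _ _ _ hs2'.
have hmu := @periodic_fpure RR _ _ hp hchar _ he _ _ hsA.
have hQ1 : (1 : RR) < (p ^ e)%:R by rewrite ltr1n -(expn0 p) ltn_exp2l.
have hmuE : E (A%:R / ((p ^ e)%:R - 1)).
  by split => //; apply: divr_ge0 => //; lra.
have := sup_upper_bound hsup hmuE; rewrite -/lam.
have -> : t * ((p ^ e)%:R / ((p ^ e)%:R - 1)) = A%:R / ((p ^ e)%:R - 1).
  rewrite hA; field; apply/andP; split => //; apply/eqP; lra.
by [].
Qed.
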